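(* In the setting described in the context, let $0<\alpha_1<1$, $\alpha_2=1-\alpha_1$, let $q_1,\dots,q_b\in\{0,1\}$ (realizations of independent Bernoulli$(p)$ random variables), $\mathbf Q=\mathrm{diag}(1-q_1,\dots,1-q_b)$, $\mathbf W=\mathrm{diag}(q_1,\dots,q_b)$, and define $\bar{\mathbf z}=(\mathbf Q+\alpha_2\mathbf W)\tilde{\mathbf z}$ and $\bar{\bm\Omega}=\mathbf Q\bm\Omega+\alpha_2\mathbf W\bm\Omega-\alpha_1\mathbf W$. Consider the randomized-damping evolution of the means of messages from indirect factor nodes to variable nodes, $\mathbf z_{\mathrm d}^{(\tau)}=\bar{\mathbf z}-\bar{\bm\Omega}\,\mathbf z_{\mathrm d}^{(\tau-1)}$ (i.e., for edges with $q_e=1$ the new mean is $\alpha_1$ times the previous mean plus $\alpha_2$ times the undamped update, and for edges with $q_e=0$ it is the undamped update). Then $\mathbf z_{\mathrm d}^{(\tau)}$ converges to a unique fixed point $\hat{\mathbf z}_{\mathrm d}$ for any initial point $\mathbf z_{\mathrm d}^{(0)}$ if and only if $\rho(\bar{\bm\Omega})<1$, and in that case $\hat{\mathbf z}_{\mathrm d}=(\mathbf I+\bm\Omega)^{-1}\tilde{\mathbf z}$, the fixed point of the undamped iteration $\mathbf z^{(\tau)}=\tilde{\mathbf z}-\bm\Omega\mathbf z^{(\tau-1)}$.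
   Context: Factor graph (DC state estimation model): variable nodes $\mathcal V=\{x_1,\dots,x_N\}$; indirect factor nodes $\mathcal F_{\mathrm{ind}}=\{f_1,\dots,f_m\}$, each $f_i$ with measurement value $z_i$, variance $v_i>0$, linear measurement function $h_i(\mathbf x)=\sum_{x_q\in\mathcal V_i}C^{(i)}_{x_q}x_q$ with nonzero coefficients, $\mathcal V_i$ the neighbours of $f_i$, $d_i=|\mathcal V_i|$. $\mathcal B$ = edges between $\mathcal V$ and $\mathcal F_{\mathrm{ind}}$, $b=|\mathcal B|$, ordered block-wise by factor node. Some variable nodes $x_q$ have a singly-connected local factor node sending a fixed Gaussian message of mean $z^{\mathrm{loc}}_{x_q}$ and variance $v^{\mathrm{loc}}_{x_q}>0$; $l_{x_q}=1/v^{\mathrm{loc}}_{x_q}$, $z_{x_q}=z^{\mathrm{loc}}_{x_q}$ if it exists, else $l_{x_q}=0$, $z_{x_q}=0$. Gaussian BP: variable-to-factor $1/v_{x_s\to f_i}=l_{x_s}+\sum_{f_a\in\mathcal F_s\setminus f_i}1/v_{f_a\to x_s}$, $z_{x_s\to f_i}=v_{x_s\to f_i}(l_{x_s}z_{x_s}+\sum_{f_a\in\mathcal F_s\setminus f_i}z_{f_a\to x_s}/v_{f_a\to x_s})$; factor-to-variable $z_{f_i\to x_s}=\frac{1}{C^{(i)}_{x_s}}(z_i-\sum_{x_b\in\mathcal V_i\setminus x_s}C^{(i)}_{x_b}z_{x_b\to f_i})$, $v_{f_i\to x_s}=\frac{1}{(C^{(i)}_{x_s})^2}(v_i+\sum_{x_b\in\mathcal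 V_i\setminus x_s}(C^{(i)}_{x_b})^2v_{x_b\to f_i})$. Edge-indexed matrices: $\mathbf C=\mathrm{diag}(C^{(i)}_{x_q})$, $\mathbf L=\mathrm{diag}(l_{x_q})$, $\mathbf z_{\mathrm a}$ with entry $z_i$ on edges of $f_i$, $\mathbf z_{\mathrm b}$ with entry $z_{x_q}$ on edge $(f_i,x_q)$, $\bm\Pi=\mathrm{blockdiag}(\mathbf 1_{d_i\times d_i}-\mathbf I_{d_i})$, $\bm\Gamma\in\{0,1\}^{b\times b}$ with zero diagonal blocks and, for edges of different factor nodes, entry $1$ iff they are incident to the same variable node. $\mathfrak D(\cdot)$ is the diagonal part of a matrix. $\hat{\mathbf v}_{\mathrm s}$ is the (unique) limit of the factor-to-variable variances, $\hat{\bm\Sigma}_{\mathrm s}=\mathrm{diag}(\hat{\mathbf v}_{\mathrm s})$, $\hat{\mathbf A}=\bm\Gamma\hat{\bm\Sigma}_{\mathrm s}^{-1}\bm\Gamma^{\mathrm T}+\mathbf L$, $\mathbf D=\mathbf C^{-1}\bm\Pi\mathbf C$, $\bm\Omega=\mathbf D(\mathfrak D(\hat{\mathbf A}))^{-1}\bm\Gamma\hat{\bm\Sigma}_{\mathrm s}^{-1}$, $\tilde{\mathbf z}=\mathbf C^{-1}\mathbf z_{\mathrm a}-\mathbf D(\mathfrak D(\hat{\mathbf A}))^{-1}\mathbf L\mathbf z_{\mathrm b}$. $\rho(\cdot)$ denotes spectral radius. *)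

(* Defs.v *)
From HB Require Import structures.
From mathcomp Require Import all_boot all_order all_algebra.
From mathcomp Require Import all_classical all_reals all_analysis.
From mathcomp Require Import complex.

Set Implicit Arguments.
Unset Strict Implicit.
Unset Printing Implicit Defensive.

Import Order.TTheory GRing.Theory Num.Theory.
Local Open Scope ring_scope.
Local Open Scope classical_set_scope.

(* Spectral radius of a real square matrix: the supremum (= maximum, the set
   being finite) of the moduli of its complex eigenvalues.  sup set0 = 0. *)
Definition spectral_radius (R : realType) (n : nat) (M : 'M[R]_n) : R :=
  sup [set r : R | exists2 lam : R[i],
         eigenvalue (map_mx (real_complex R) M) lam & r = ComplexField.Normc.normc lam].

Definition diagpart (R : pzRingType) (n : nat) (M : 'M[R]_n) : 'M[R]_n :=
  diag_mx (\row_i M i i).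

Section FG.
Variables (R : realType) (N m b : nat).
(* edge e = (f_(fac e), x_(var e)) *)
Variables (fac : 'I_b -> 'I_m) (var : 'I_b -> 'I_N).
Variable (C : 'I_b -> R).              (* coefficient C^{(fac e)}_{x_(var e)} *)
Variable (zmeas : 'I_m -> R).
Variables (hasloc : 'I_N -> bool) (zloc vloc : 'I_N -> R).
Variable (vhat : 'I_b -> R).           (* limit factor-to-variable variances *)

Definition lvar (q : 'I_N) : R := if hasloc q then (vloc q)^-1 else 0.
Definition zvar (q : 'I_N) : R := if hasloc q then zloc q else 0.

Definition Cmx : 'M[R]_b := diag_mx (\row_e C e).
Definition Lmx : 'M[R]_b := diag_mx (\row_e lvar (var e)).
Definition za : 'cV[R]_b := \col_e zmeas (fac e).
Definition zb : 'cV[R]_b := \col_e zvar (var e).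
Definition Pimx : 'M[R]_b := \matrix_(e, e') ((fac e == fac e') && (e != e'))%:R.
Definition Gammx : 'M[R]_b :=
  \matrix_(e, e') ((fac e != fac e') && (var e == var e'))%:R.
Definition Sigmx : 'M[R]_b := diag_mx (\row_e vhat e).
Definition Ahat : 'M[R]_b := Gammx *m invmx Sigmx *m Gammx^T + Lmx.
Definition Dmx : 'M[R]_b := invmx Cmx *m Pimx *m Cmx.
Definition Omega : 'M[R]_b :=
  Dmx *m invmx (diagpart Ahat) *m Gammx *m invmx Sigmx.
Definition ztil : 'cV[R]_b :=
  invmx Cmx *m za - Dmx *m invmx (diagpart Ahat) *m Lmx *m zb.

Variables (alpha1 : R) (qs : 'I_b -> bool).
Definition alpha2 : R := 1 - alpha1.
Definition Qmx : 'M[R]_b := diag_mx (\row_e (~~ qs e)%:R).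
Definition Wmx : 'M[R]_b := diag_mx (\row_e (qs e)%:R).
Definition zbar : 'cV[R]_b := (Qmx + alpha2 *: Wmx) *m ztil.
Definition Omegabar : 'M[R]_b :=
  Qmx *m Omega + alpha2 *: (Wmx *m Omega) - alpha1 *: Wmx.

Definition zd (z0 : 'cV[R]_b) (tau : nat) : 'cV[R]_b :=
  iter tau (fun z => zbar - Omegabar *m z) z0.

Definition damped_fixed (z : 'cV[R]_b) : Prop := z = zbar - Omegabar *m z.
End FG.

(* Main.v *)
Require Import Defs.
Set Warnings "-all".
From HB Require Import structures.
From mathcomp Require Import all_boot all_order all_algebra.
From mathcomp Require Import all_classical all_reals all_analysis.
From mathcomp Require Import complex.
From mathcomp Require Import ring lra.
Import Order.TTheory GRing.Theory Num.Theory.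
Import numFieldTopology.Exports numFieldNormedType.Exports.
Local Open Scope classical_set_scope.
Local Open Scope ring_scope.

Section S. Set Implicit Arguments. Variable R : realType.
Local Notation C := (R[i]).
Local Notation normc := (@ComplexField.Normc.normc R).
Local Notation rc := (real_complex R).

Lemma rec0 (s t : nat -> R) (c : R) : 0 <= c -> c < 1 -> (forall k, 0 <= s k) ->
  (forall k, s k.+1 <= c * s k + t k) -> t @ \oo --> 0 -> s @ \oo --> 0.
Proof.
move=> c0 c1 s0 rec /cvgr0Pnorm_lt tc; apply/cvgr0Pnorm_lt => e e0.
have c1' : 0 < 1 - c by rewrite subr_gt0.
pose d := e * (1 - c) / 2.
have d0 : 0 < d by rewrite /d divr_gt0 // mulr_gt0.
have [K _ HK] := tc d d0.
have bnd j : s (K + j)%N <= c ^+ j * s K + e / 2.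
  elim: j => [|j IH]; first by rewrite expr0 mul1r ssrnat.addn0 lerDl ltW // divr_gt0.
  rewrite ssrnat.addnS; apply: le_trans (rec _) _.
  have : `|t (K + j)%N| < d by apply: HK => /=; rewrite leq_addr.
  move=> /ltr_normlW tlt.
  have : c * s (K + j)%N <= c * (c ^+ j * s K + e / 2) by rewrite ler_wpM2l.
  rewrite exprS /d; move: tlt; rewrite /d => tlt h.
  have : c * (e / 2) + e * (1 - c) / 2 = e / 2 by field.
  move=> eq; lra.
have sK0 : 0 < s K + 1 by have := s0 K; lra.
have cn : `|c| < 1 by rewrite ger0_norm.
have e2 : 0 < e / 2 / (s K + 1) by rewrite !divr_gt0.
have [J _ HJ] := (cvgr0Pnorm_lt _).1 (cvg_expr cn) _ e2.
near=> k.
have Hk : (K + J <= k)%N by near: k; exact: nbhs_infty_ge.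
have [j kE] : exists j, k = (K + j)%N by exists (k - K)%N; rewrite subnKC // (leq_trans (leq_addr _ _) Hk).
move: Hk; rewrite kE.
rewrite leq_add2l => Jj.
have := HJ j Jj; rewrite /= ger0_norm ?exprn_ge0 // => hc.
rewrite ger0_norm //.
apply: le_lt_trans (bnd j) _.
have : c ^+ j * s K <= c ^+ j * (s K + 1) by rewrite ler_wpM2l ?exprn_ge0 //; lra.
have : c ^+ j * (s K + 1) < e / 2 by rewrite -ltr_pdivlMr.
lra.
Unshelve. all: by end_near. Qed.

Lemma normc_ge0 (x : C) : 0 <= normc x.
Proof. by case: x => a b; exact: sqrtr_ge0. Qed.

Lemma normc_real (x : R) : normc (rc x) = `|x|.
Proof. by rewrite /= expr0n /= addr0 sqrtr_sqr. Qed.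

Definition Sv {n} (v : 'cV[C]_n) : R := \sum_i normc (v i 0).

Lemma Sv_ge0 n (v : 'cV[C]_n) : 0 <= Sv v.
Proof. by apply: sumr_ge0 => i _; exact: normc_ge0. Qed.

Lemma SvD n (u v : 'cV[C]_n) : Sv (u + v) <= Sv u + Sv v.
Proof. rewrite /Sv -big_split; apply: ler_sum => i _; rewrite mxE; exact: le_normcD. Qed.

Lemma SvZ n a (v : 'cV[C]_n) : Sv (a *: v) = normc a * Sv v.
Proof. rewrite /Sv mulr_sumr; apply: eq_bigr => i _; by rewrite mxE ComplexField.Normc.normcM. Qed.

Lemma Sv0 n : Sv (0 : 'cV[C]_n) = 0.
Proof. by rewrite /Sv big1 // => i _; rewrite mxE ComplexField.Normc.normc0. Qed.

Lemma geo_vec n (B : 'M[C]_n.+1) (s : seq C) : all (fun z => normc z < 1) s ->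
  forall y, horner_mx B (\prod_(z <- s) ('X - z%:P)) *m y = 0 ->
  (fun k => Sv (B ^+ k *m y)) @ \oo --> 0.
Proof.
elim: s => [|z s IH] /=.
  move=> _ y; rewrite big_nil rmorph1 mul1mx => ->.
  under eq_fun do rewrite mulmx0 Sv0. exact: cvg_cst.
move=> /andP[zlt alls] y; rewrite big_cons => hy.
pose w := (B - z%:M) *m y.
have hw : horner_mx B (\prod_(z <- s) ('X - z%:P)) *m w = 0.
  by rewrite /w mulmxA -hy mulrC rmorphM /= rmorphB /= horner_mx_X horner_mx_C mulmxE.
have := IH alls w hw => cw.
apply: (@rec0 _ (fun k => Sv (B ^+ k *m w)) (normc z)) => //.
- exact: normc_ge0.
- move=> k; exact: Sv_ge0.
move=> k.
have -> : B ^+ k.+1 *m y = z *: (B ^+ k *m y) + B ^+ k *m w.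
  rewrite /w mulmxA mulmxBr mulmxBl mul_mx_scalar -scalemxAl addrC subrK.
  by rewrite exprSr -mulmxE.
have h := SvD (z *: (B ^+ k *m y)) (B ^+ k *m w). rewrite SvZ in h. exact: h.
Qed.

Lemma cplx_cvg n (B : 'M[C]_n.+1) : (forall l, eigenvalue B l -> normc l < 1) ->
  forall y, (fun k => Sv (B ^+ k *m y)) @ \oo --> 0.
Proof.
move=> hl y; have [r hr] := closed_field_poly_normal (char_poly B).
have lc : lead_coef (char_poly B) = 1 by apply/monicP/char_poly_monic.
rewrite lc scale1r in hr.
apply: (@geo_vec n B r).
  by apply/allP => z zr; apply: hl; rewrite eigenvalue_root_char hr root_prod_XsubC.
by rewrite -hr Cayley_Hamilton mul0mx.
Qed.

Lemma eig_finite n (M : 'M[R]_n) :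
  exists r : seq C, forall l, eigenvalue (map_mx rc M) l = (l \in r).
Proof.
have [r hr] := closed_field_poly_normal (char_poly (map_mx rc M)).
have lc : lead_coef (char_poly (map_mx rc M)) = 1 by apply/monicP/char_poly_monic.
rewrite lc scale1r in hr.
by exists r => l; rewrite eigenvalue_root_char hr root_prod_XsubC.
Qed.

Lemma sr_lt1 n (M : 'M[R]_n) : spectral_radius M < 1 ->
  forall l, eigenvalue (map_mx rc M) l -> normc l < 1.
Proof.
move=> hs l hl; have [r hr] := eig_finite M.
set E := [set x : R | exists2 lam : R[i], eigenvalue (map_mx rc M) lam & x = normc lam].
have ub : ubound E (\big[Num.max/0]_(z <- r) normc z).
  move=> x [lam hlam ->]; apply: (le_bigmax_seq _ _ (fun=> true)) => //.
  by rewrite -hr.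
have hub : has_ubound E by exists (\big[Num.max/0]_(z <- r) normc z).
apply: le_lt_trans hs; apply: (ub_le_sup hub); by exists l.
Qed.

Lemma sr_lt1_conv n (M : 'M[R]_n) :
  (forall l, eigenvalue (map_mx rc M) l -> normc l < 1) -> spectral_radius M < 1.
Proof.
move=> hl; have [r hr] := eig_finite M.
rewrite /spectral_radius.
set E := [set x : R | exists2 lam : R[i], eigenvalue (map_mx rc M) lam & x = normc lam].
have [->|/set0P ne] := eqVneq E set0; first by rewrite sup0.
have ub : ubound E (\big[Num.max/0]_(z <- r | eigenvalue (map_mx rc M) z) normc z).
  move=> x [lam hlam ->]; apply: le_bigmax_seq => //.
  by rewrite -hr.
apply: (le_lt_trans (ge_sup ne ub)).
by apply: bigmax_lt => // z; apply: hl.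
Qed.

Lemma eig_unit (F : fieldType) n (A : 'M[F]_n) a : eigenvalue A a = (A - a%:M \notin unitmx).
Proof. by rewrite /eigenvalue /eigenspace kermx_eq0 row_free_unit. Qed.

Lemma norm_le_Sv n (x : 'cV[R]_n) : `|x| <= Sv (map_mx rc x).
Proof.
change (mx_norm x <= Sv (map_mx rc x)); rewrite mx_normrE.
apply: bigmax_le => [|[i j] _ /=]; first exact: Sv_ge0.
rewrite (ord1 j) /Sv (bigD1 i) //= mxE normc_real lerDl.
by apply: sumr_ge0 => k _; exact: normc_ge0.
Qed.

Lemma real_pow_cvg n (M : 'M[R]_n.+1) : spectral_radius M < 1 ->
  forall d : 'cV[R]_n.+1, (fun k => (- M) ^+ k *m d) @ \oo --> (0 : 'cV[R]_n.+1).
Proof.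
move=> hs d; have hl := @sr_lt1 _ M hs.
have hl' : forall l, eigenvalue (map_mx rc (- M)) l -> normc l < 1.
  move=> l; rewrite map_mxN eig_unit => hu.
  rewrite -normcN; apply: hl; rewrite eig_unit.
  apply: contra hu => hu.
  have -> : - map_mx rc M - l%:M = - (map_mx rc M - (- l)%:M).
    by rewrite raddfN /= opprD opprK.
  by rewrite -scaleN1r unitmxE detZ unitrMl ?unitrX ?unitrN1 // -unitmxE.
have cc := @cplx_cvg _ _ hl' (map_mx rc d).
apply/cvgr0Pnorm_lt => e e0.
move/cvgr0Pnorm_lt: cc => /(_ e e0); apply: filterS => k /=.
rewrite ger0_norm ?Sv_ge0 // => h; apply: le_lt_trans h.
have -> : (map_mx rc (- M)) ^+ k *m map_mx rc d = map_mx rc ((- M) ^+ k *m d).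
  by rewrite map_mxM rmorphXn.
exact: norm_le_Sv.
Qed.

Lemma iter_affine n (M : 'M[R]_n) (c zh : 'cV[R]_n) : zh = c - M *m zh ->
  forall z0 k, iter k (fun z => c - M *m z) z0 = zh + (- M) ^+ k *m (z0 - zh).
Proof.
move=> hz z0; elim=> [|k IH] /=; first by rewrite expr0 mul1mx addrC subrK.
rewrite IH mulmxDr opprD addrA -hz exprS -mulmxE !mulNmx -mulmxA.
by [].
Qed.

Lemma mx00 m (A B : 'M[R]_(0, m)) : A = B.
Proof. by rewrite (flatmx0 A) (flatmx0 B). Qed.

Lemma convA n (M : 'M[R]_n) (c : 'cV[R]_n) : spectral_radius M < 1 ->
  1 + M \in unitmx /\
  forall z0, (fun k => iter k (fun z => c - M *m z) z0) @ \oo --> invmx (1 + M) *m c.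
Proof.
case: n M c => [|n] M c hs.
  split; first by rewrite unitmxE det_mx00 unitr1.
  move=> z0; have -> : (fun k => iter k (fun z => c - M *m z) z0) = fun=> invmx (1 + M) *m c.
    by apply/funext => k; apply: mx00.
  exact: cvg_cst.
have hu : 1 + M \in unitmx.
  apply/negPn/negP => hn.
  have : eigenvalue M (-1).
    by rewrite eig_unit; have -> : M - (-1)%:M = 1 + M by rewrite raddfN /= opprK addrC.

  rewrite -(eigenvalue_map rc) => he.
  by have := @sr_lt1 _ M hs _ he; rewrite normc_real normrN normr1 ltxx.
split => // z0.
set zh := invmx (1 + M) *m c.
have hz : zh = c - M *m zh.
  have : (1 + M) *m zh = c by rewrite /zh mulKVmx.
  by rewrite mulmxDl mul1mx => <-; rewrite addrK.
have -> : (fun k => iter k (fun z => c - M *m z) z0) = fun k => zh + (- M) ^+ k *m (z0 - zh).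
  by apply/funext => k; rewrite (iter_affine hz).
rewrite -[X in _ --> X]addr0; apply: cvgD; first exact: cvg_cst.
exact: real_pow_cvg.
Qed.

Lemma normcX (x : C) k : normc (x ^+ k) = normc x ^+ k.
Proof.
elim: k => [|k IH]; first by rewrite !expr0 ComplexField.Normc.normc1.
by rewrite !exprS ComplexField.Normc.normcM IH.
Qed.

Lemma entry_le_norm n (x : 'cV[R]_n) j : `|x j 0| <= `|x|.
Proof.
change (`|x j 0| <= mx_norm x); rewrite mx_normrE.
exact: (le_bigmax _ (fun ij : 'I_n * 'I_1 => `|x ij.1 ij.2|) (j, 0)).
Qed.

Lemma map_pow n (M : 'M[R]_n) (d : 'cV[R]_n) k :
  map_mx rc ((- M) ^+ k *m d) = (- map_mx rc M) ^+ k *m map_mx rc d.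
Proof.
elim: k => [|k IH]; first by rewrite !expr0 !mul1mx.
rewrite !exprS -!mulmxE -!mulmxA map_mxM IH map_mxN.
by [].
Qed.

Lemma eig_pow n (B : 'M[C]_n) (w : 'cV[C]_n) l k : B *m w = l *: w ->
  (- B) ^+ k *m w = (- l) ^+ k *: w.
Proof.
move=> hw; elim: k => [|k IH]; first by rewrite !expr0 mul1mx scale1r.
rewrite !exprS -!mulmxE -mulmxA IH -scalemxAr mulNmx hw -scaleNr scalerA.
by rewrite mulrC.
Qed.

Lemma convB n (M : 'M[R]_n) (c zh : 'cV[R]_n) : zh = c - M *m zh ->
  (forall z0, (fun k => iter k (fun z => c - M *m z) z0) @ \oo --> zh) ->
  spectral_radius M < 1.
Proof.
move=> hz hc; apply: sr_lt1_conv => l hl.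
rewrite ltNge; apply/negP => hge.
have pc d : (fun k => (- M) ^+ k *m d) @ \oo --> (0 : 'cV[R]_n).
  have -> : (fun k => (- M) ^+ k *m d) =
            (fun k => iter k (fun z => c - M *m z) (zh + d) - zh).
    apply/funext => k; rewrite (iter_affine hz) [zh + d]addrC addrK.
    by rewrite [zh + _]addrC addrK.
  rewrite -(subrr zh); apply: cvgB => //; exact: cvg_cst.
have : eigenvalue (map_mx rc M)^T l.
  rewrite eig_unit in hl; rewrite eig_unit -unitmx_tr linearB /= trmxK tr_scalar_mx.
  exact: hl.
case/eigenvalueP => v hv v0.
set w := v^T.
have hw : map_mx rc M *m w = l *: w.
  by apply: trmx_inj; rewrite trmx_mul !trmxK hv linearZ /= trmxK.
have [j hj] : exists j, w j 0 != 0.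
  case: (pickP (fun j => w j 0 != 0)) => [j hj|h0]; first by exists j.
  exfalso; move/negP: v0; apply; apply/eqP/rowP => i.
  by move: (h0 i); rewrite /w !mxE => /negbFE/eqP.
set a := map_mx (@complex.Re R) w; set bb := map_mx (@complex.Im R) w.
have wE : w = map_mx rc a + 'i%C *: map_mx rc bb.
  by apply/matrixP => i k; rewrite !mxE; exact: complexE.
have powE k : map_mx rc ((- M) ^+ k *m a) + 'i%C *: map_mx rc ((- M) ^+ k *m bb)
              = (- l) ^+ k *: w.
  by rewrite !map_pow scalemxAr -mulmxDr -wE (eig_pow _ hw).
have nw0 : 0 < normc (w j 0).
  rewrite lt_neqAle normc_ge0 andbT eq_sym; apply/negP => /eqP h.
  by move/negP: hj; apply; apply/eqP; apply: ComplexField.Normc.eq0_normc.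
pose dl := normc (w j 0) / 2.
have dl0 : 0 < dl by rewrite divr_gt0.
move/cvgr0Pnorm_lt: (pc a) => /(_ dl dl0) [K1 _ H1].
move/cvgr0Pnorm_lt: (pc bb) => /(_ dl dl0) [K2 _ H2].
pose k := maxn K1 K2.
have h1 := H1 k (leq_maxl _ _); have h2 := H2 k (leq_maxr _ _).
move: h1 h2 => /= h1 h2.
have e : rc (((- M) ^+ k *m a) j 0) + 'i%C * rc (((- M) ^+ k *m bb) j 0) = (- l) ^+ k * w j 0.
  by move: (congr1 (fun X : 'cV[C]_n => X j 0) (powE k)); rewrite !mxE.
have : normc ((- l) ^+ k * w j 0) <= `|((- M) ^+ k *m a) j 0| + `|((- M) ^+ k *m bb) j 0|.
  rewrite -e; apply: le_trans (le_normcD _ _) _.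
  rewrite ComplexField.Normc.normcM !normc_real.
  have -> : normc 'i%C = 1 by rewrite /= expr0n expr1n add0r sqrtr1.
  by rewrite mul1r.
rewrite ComplexField.Normc.normcM normcX normcN.
have := entry_le_norm ((- M) ^+ k *m a) j; have := entry_le_norm ((- M) ^+ k *m bb) j.
have : 1 <= normc l ^+ k by rewrite exprn_ege1.
move=> hk e1 e2 hle.
have : normc (w j 0) <= normc l ^+ k * normc (w j 0) by rewrite ler_peMl // ltW.
rewrite /dl in h1 h2; lra.
Qed.

Lemma fixed_inv n (M : 'M[R]_n) (c : 'cV[R]_n) : 1 + M \in unitmx ->
  invmx (1 + M) *m c = c - M *m (invmx (1 + M) *m c).
Proof.
move=> hu; have : (1 + M) *m (invmx (1 + M) *m c) = c by rewrite mulKVmx.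
by rewrite mulmxDl mul1mx => {2}<-; rewrite addrK.
Qed.

Lemma fixed_uniq n (M : 'M[R]_n) (c z : 'cV[R]_n) : 1 + M \in unitmx ->
  z = c - M *m z -> z = invmx (1 + M) *m c.
Proof.
move=> hu hz; have : (1 + M) *m z = c by rewrite mulmxDl mul1mx {1}hz subrK.
by move=> <-; rewrite mulKmx.
Qed.

Lemma zmod_id (V : zmodType) (q w x y z : V) :
  (q + w) + (x + y - z) = (q + (w - z)) + (x + y).
Proof. by rewrite [q + (w - z)]addrA [RHS]addrAC [LHS]addrA. Qed.
End S.

Theorem theorem3p2p4 (R : realType) (N m b : nat)
  (fac : 'I_b -> 'I_m) (var : 'I_b -> 'I_N)
  (C : 'I_b -> R) (zmeas vmeas : 'I_m -> R)
  (hasloc : 'I_N -> bool) (zloc vloc : 'I_N -> R) (vhat : 'I_b -> R)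
  (alpha1 : R) (qs : 'I_b -> bool) :
  injective (fun e => (fac e, var e)) ->
  (forall e, C e != 0) ->
  (forall i, 0 < vmeas i) ->
  (forall q, hasloc q -> 0 < vloc q) ->
  (forall e, 0 < vhat e) ->
  diagpart (Ahat fac var hasloc vloc vhat) \in unitmx ->
  0 < alpha1 < 1 ->
  let Om := Omega fac var C hasloc vloc vhat in
  let zt := ztil fac var C zmeas hasloc zloc vloc vhat in
  let Ombar := Omegabar fac var C hasloc vloc vhat alpha1 qs in
  let it := zd fac var C zmeas hasloc zloc vloc vhat alpha1 qs in
  let fixd := damped_fixed fac var C zmeas hasloc zloc vloc vhat alpha1 qs in
  ((exists zhat : 'cV[R]_b,
       [/\ fixd zhat, (forall z, fixd z -> z = zhat)
         & forall z0 : 'cV[R]_b, it z0 @ \oo --> zhat])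
   <-> spectral_radius Ombar < 1)
  /\ (spectral_radius Ombar < 1 ->
      [/\ 1 + Om \in unitmx,
          invmx (1 + Om) *m zt = zt - Om *m (invmx (1 + Om) *m zt)
        & forall z0 : 'cV[R]_b, it z0 @ \oo --> invmx (1 + Om) *m zt]).
Proof.
move=> inj Cnz vpos lpos vhpos dunit /andP[a0 a1] Om zt Ombar it fixd.
set Q := Qmx R qs; set W := Wmx R qs.
have QW : Q + W = 1.
  apply/matrixP => i j; rewrite !mxE.
  by case: (i == j); case: (qs i); rewrite /= ?mulr1n ?mulr0n ?addr0 ?add0r.
have F1 : 1 + Ombar = (Q + alpha2 alpha1 *: W) *m (1 + Om).
  rewrite mulmxDr mulmx1 mulmxDl -scalemxAl /Ombar /Omegabar -/Q -/W -/Om.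
  have -> : alpha2 alpha1 *: W = W - alpha1 *: W by rewrite /alpha2 scalerBl scale1r.
  rewrite -{1}QW; exact: zmod_id.
have zbE : zbar fac var C zmeas hasloc zloc vloc vhat alpha1 qs = (Q + alpha2 alpha1 *: W) *m zt by [].
set zb := zbar fac var C zmeas hasloc zloc vloc vhat alpha1 qs.
split.
  split.
    case=> zh [fx _ cv].
    exact: (@convB _ _ Ombar zb zh fx cv).
  move=> hs; have [hu hc] := @convA _ _ Ombar zb hs.
  exists (invmx (1 + Ombar) *m zb); split.
  - exact: fixed_inv.
  - move=> z hz; exact: fixed_uniq.
  - exact: hc.
move=> hs; have [hu hc] := @convA _ _ Ombar zb hs.
have hu' : 1 + Om \in unitmx by move: hu; rewrite F1 unitmx_mul => /andP[].
split => //; first exact: fixed_inv.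
have -> : invmx (1 + Om) *m zt = invmx (1 + Ombar) *m zb.
  have hx : (1 + Ombar) *m (invmx (1 + Om) *m zt) = zb.
    rewrite F1 -mulmxA (mulKVmx hu'); exact: (esym zbE).
  by rewrite -hx (mulKmx hu).
exact: hc.
Qed.
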